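(* For all positive integers $n$ and $k$, the outcome class of $G_{n,2nk}$ is $H$.
   Context: Domineering is a two-player game played on a rectangular grid of unit squares. The players alternate placing dominoes, each covering two adjacent unoccupied squares; the player Vertical must place dominoes vertically (covering two squares in the same column), and the player Horizontal must place them horizontally (covering two squares in the same row). A player with no legal move on her turn loses. $G_{m,n}$ denotes the empty board with vertical dimension $m$ (number of rows) and horizontal dimension $n$ (number of columns). Every position has one of four outcome classes under optimal play: $V$ (Vertical wins whoever moves first), $H$ (Horizontal wins whoever moves first), $1$ (the player who moves first wins), $2$ (the player who moves second wins). *)

(* Defs.v *)
(* Domineering on an m x n board (m rows, n columns). *)
From mathcomp Require Import all_boot.
Set Implicit Arguments. Unset Strict Implicit. Unset Printing Implicit Defensive.

Inductive player := Vertical | Horizontal.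

Definition opponent (p : player) : player :=
  match p with Vertical => Horizontal | Horizontal => Vertical end.

(* Cells are (row, column) pairs. A position is the set of UNOCCUPIED cells. *)
Definition cell (m n : nat) := ('I_m * 'I_n)%type.

Definition domino (m n : nat) (p : player) (c d : cell m n) : bool :=
  match p with
  | Vertical => (c.2 == d.2) && (val d.1 == (val c.1).+1)
  | Horizontal => (c.1 == d.1) && (val d.2 == (val c.2).+1)
  end.

Definition move (m n : nat) (p : player) (F F' : {set cell m n}) : Prop :=
  exists c d : cell m n,
    [&& c \in F, d \in F & domino p c d] /\ F' = F :\ c :\ d.

Inductive wins (m n : nat) : player -> {set cell m n} -> Prop :=
| wins_intro p F F' : move p F F' -> loses (opponent p) F' -> wins p F
with loses (m n : nat) : player -> {set cell m n} -> Prop :=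
| loses_intro p F :
    (forall F', move p F F' -> wins (opponent p) F') -> loses p F.

Inductive outcome := OutV | OutH | Out1 | Out2.

Definition has_outcome (m n : nat) (F : {set cell m n}) (o : outcome) : Prop :=
  match o with
  | OutV => wins Vertical F /\ loses Horizontal F
  | OutH => wins Horizontal F /\ loses Vertical F
  | Out1 => wins Vertical F /\ wins Horizontal F
  | Out2 => loses Vertical F /\ loses Horizontal F
  end.

Definition G (m n : nat) : {set cell m n} := [set: cell m n].

(* Main.v *)
Require Import Defs.
From mathcomp Require Import all_boot.
From mathcomp Require Import zify.

Set Implicit Arguments. Unset Strict Implicit. Unset Printing Implicit Defensive.

Section Sym.
Variables (m n : nat) (f : cell m n -> cell m n).
Hypothesis fK : involutive f.
Hypothesis hV : forall c d, domino Vertical c d ->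
  [/\ f c != c, f c != d, f d != c, f d != d &
     domino Horizontal (f c) (f d) || domino Horizontal (f d) (f c)].

Lemma feqE x y : (f x == y) = (x == f y).
Proof. by rewrite -[y in f x == y]fK (can_eq fK). Qed.

Lemma domV_neq (c d : cell m n) : domino Vertical c d -> c != d.
Proof. by move=> /andP [_ /eqP h]; apply/eqP => e; move: h; rewrite e => /n_Sn. Qed.

Lemma loses_sym (F : {set cell m n}) : (forall x, (f x \in F) = (x \in F)) -> loses Vertical F.
Proof.
have [N] := ubnP #|F|; elim: N F => // N IH F hN hF.
constructor => F' [c [d [/and3P [cF dF cd] ->]]] /=.
have [h1 h2 h3 h4 h5] := hV cd.
have fcF : f c \in F by rewrite hF.
have fdF : f d \in F by rewrite hF.
have Hcl : forall x, (f x \in F :\ c :\ d :\ f c :\ f d) =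
                     (x \in F :\ c :\ d :\ f c :\ f d).
  move=> x; rewrite !in_setD1 !(can_eq fK) !feqE hF.
  by case: (x == c); case: (x == d); case: (x == f c); case: (x == f d).
have Hlt : #|F :\ c :\ d :\ f c :\ f d| < N.
  suff h : #|F :\ c :\ d :\ f c :\ f d| < #|F| by exact: leq_trans h hN.
  apply: (@leq_ltn_trans #|F :\ c|).
    apply: subset_leq_card; apply/subsetP => x.
    by rewrite !in_setD1 => /and5P [_ _ _ -> ->]; rewrite andbT.
  by rewrite (cardsD1 c F) cF.
case/orP: h5 => hd.
- apply: (@wins_intro _ _ _ _ (F :\ c :\ d :\ f c :\ f d)); last exact: IH.
  exists (f c), (f d); split => //.
  by rewrite !in_setD1 hd h1 h2 fcF fdF h3 h4.
- apply: (@wins_intro _ _ _ _ (F :\ c :\ d :\ f c :\ f d)); last exact: IH.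
  exists (f d), (f c); split.
    by rewrite !in_setD1 hd h1 h2 fcF fdF h3 h4.
  apply/setP => x; rewrite !in_setD1.
  by case: (x == f c); case: (x == f d).
Qed.
End Sym.

Definition psin (n r c : nat) : nat * nat :=
  let b := c %/ (2 * n) in let c' := c %% (2 * n) in
  if c' < n then (c', 2 * n * b + ((2 * n).-1 - r))
  else ((2 * n).-1 - c', 2 * n * b + r).

Lemma divmodE d b c' : 0 < d -> c' < d -> (d * b + c') %/ d = b /\ (d * b + c') %% d = c'.
Proof.
move=> d0 hc; rewrite mulnC divnMDl // divn_small // addn0 modnMDl modn_small //.
Qed.

Lemma psin_spec n k r c : 0 < n -> r < n -> c < 2 * n * k ->
  exists b c', [/\ c = 2 * n * b + c', c' < 2 * n, b < k &
    psin n r c = if c' < n then (c', 2 * n * b + ((2 * n).-1 - r))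
                 else ((2 * n).-1 - c', 2 * n * b + r)].
Proof.
move=> n0 rn ck.
have d0 : 0 < 2 * n by lia.
exists (c %/ (2 * n)), (c %% (2 * n)); split => //.
- by rewrite {1}(divn_eq c (2 * n)) mulnC.
- by rewrite ltn_mod.
- by rewrite ltn_divLR // mulnC.
Qed.

Lemma psin_bound n k r c : 0 < n -> r < n -> c < 2 * n * k ->
  (psin n r c).1 < n /\ (psin n r c).2 < 2 * n * k.
Proof.
move=> n0 rn ck; have [b [c' [-> hc' hb ->]]] := psin_spec n0 rn ck.
have : 2 * n * b.+1 <= 2 * n * k by rewrite leq_mul2l hb orbT.
case: ifP => h /=; nia.
Qed.

Lemma psin_inv n k r c : 0 < n -> r < n -> c < 2 * n * k ->
  psin n (psin n r c).1 (psin n r c).2 = (r, c).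
Proof.
move=> n0 rn ck; have [b [c' [-> hc' hb ->]]] := psin_spec n0 rn ck.
have d0 : 0 < 2 * n by lia.
case: (ltnP c' n) => hc /=; rewrite /psin.
- have hr : (2 * n).-1 - r < 2 * n by lia.
  have [-> ->] := divmodE b d0 hr.
  have -> : ((2 * n).-1 - r < n) = false by apply/negbTE; lia.
  congr (_, _); lia.
- have hr : r < 2 * n by lia.
  have [-> ->] := divmodE b d0 hr.
  rewrite rn; congr (_, _); lia.
Qed.

Lemma psin_half n k r c : 0 < n -> r < n -> c < 2 * n * k ->
  ((psin n r c).2 %% (2 * n) < n) = ~~ (c %% (2 * n) < n).
Proof.
move=> n0 rn ck; have [b [c' [-> hc' hb ->]]] := psin_spec n0 rn ck.
have d0 : 0 < 2 * n by lia.
have [_ ->] := divmodE b d0 hc'.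
case: (ltnP c' n) => hc /=.
- have hr : (2 * n).-1 - r < 2 * n by lia.
  have [_ ->] := divmodE b d0 hr; apply/negbTE; lia.
- have hr : r < 2 * n by lia.
  by have [_ ->] := divmodE b d0 hr.
Qed.

Lemma psin_dom n k r c : 0 < n -> r.+1 < n -> c < 2 * n * k ->
  let p := psin n r c in let q := psin n r.+1 c in
  (q.1 = p.1 /\ p.2 = q.2.+1) \/ (p.1 = q.1 /\ q.2 = p.2.+1).
Proof.
move=> n0 rn ck /=.
have rn' : r < n by lia.
have [b [c' [E hc' hb ->]]] := psin_spec n0 rn' ck.
have [b2 [c2 [E2 hc2 hb2 ->]]] := psin_spec n0 rn ck.
have d0 : 0 < 2 * n by lia.
have [e1 e2] : b2 = b /\ c2 = c'.
  have [x1 x2] := divmodE b d0 hc'; have [y1 y2] := divmodE b2 d0 hc2.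
  by rewrite -E in x1 x2; rewrite -E2 in y1 y2; rewrite -x1 -y1 -x2 -y2.
subst b2 c2.
case: (ltnP c' n) => hc /=; [left | right]; split => //; lia.
Qed.

Lemma domH m N (x y : cell m N) :
  domino Horizontal x y = (x.1 == y.1) && (val y.2 == (val x.2).+1).
Proof. by []. Qed.

Section Conc.
Variables (n k : nat).
Hypothesis n0 : 0 < n.

Definition psi (x : cell n (2 * n * k)) : cell n (2 * n * k) :=
  (insubd x.1 (psin n (val x.1) (val x.2)).1,
   insubd x.2 (psin n (val x.1) (val x.2)).2).

Arguments psi : simpl never.

Lemma psi_val x : (val (psi x).1, val (psi x).2) = psin n (val x.1) (val x.2).
Proof.
have [h1 h2] := psin_bound n0 (ltn_ord x.1) (ltn_ord x.2).
by rewrite /psi /= !val_insubd h1 h2; case: psin.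
Qed.

Lemma psi_val1 x : val (psi x).1 = (psin n (val x.1) (val x.2)).1.
Proof. by rewrite -psi_val. Qed.
Lemma psi_val2 x : val (psi x).2 = (psin n (val x.1) (val x.2)).2.
Proof. by rewrite -psi_val. Qed.

Lemma psiK : involutive psi.
Proof.
move=> x.
have E := psin_inv n0 (ltn_ord x.1) (ltn_ord x.2).
rewrite -psi_val1 -psi_val2 -psi_val in E.
case: E => e1 e2; case: x e1 e2 => a b /= e1 e2.
by congr (_, _); apply: val_inj.
Qed.

Lemma psi_neq x y : x.2 = y.2 -> psi x != y.
Proof.
move=> e; apply/eqP => h.
have := psin_half n0 (ltn_ord x.1) (ltn_ord x.2).
by rewrite -psi_val2 h e; case: (_ < n).
Qed.

Lemma psi_hV c d : domino Vertical c d ->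
  [/\ psi c != c, psi c != d, psi d != c, psi d != d &
     domino Horizontal (psi c) (psi d) || domino Horizontal (psi d) (psi c)].
Proof.
case/andP => /eqP e /eqP e1.
split; try (apply: psi_neq; done); try (apply: psi_neq; by rewrite e).

have rn : (val c.1).+1 < n by rewrite -e1; exact: ltn_ord.
have P1 := psi_val1 c; have P2 := psi_val2 c.
have Q1 := psi_val1 d; have Q2 := psi_val2 d.
rewrite e1 -e in Q1 Q2.
have H := psin_dom n0 rn (ltn_ord c.2).
rewrite /= -P1 -P2 -Q1 -Q2 in H.
case: H => [[h1 h2] | [h1 h2]].
- have D1 : (psi d).1 = (psi c).1 := val_inj h1.
  by rewrite !domH D1 eqxx h2 eqxx orbT.
- have D1 : (psi c).1 = (psi d).1 := val_inj h1.
  by rewrite !domH D1 eqxx h2 eqxx.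
Qed.



Lemma main_loses : loses Vertical (G n (2 * n * k)).
Proof.
by apply: (loses_sym psiK (@psi_hV)) => x; rewrite /G !inE.
Qed.

Lemma main_wins : 0 < k -> wins Horizontal (G n (2 * n * k)).
Proof.
move=> k0.
have h1 : n.-1 < n by lia.
have h2 : n.-1 < 2 * n * k by nia.
pose x0 : cell n (2 * n * k) := (Ordinal h1, Ordinal h2).
have E : psin n n.-1 n.-1 = (n.-1, n).
  rewrite /psin divn_small ?modn_small; try lia.
  rewrite h1; congr (_, _); lia.
have P1 : val (psi x0).1 = n.-1 by rewrite psi_val1 /= E.
have P2 : val (psi x0).2 = n by rewrite psi_val2 /= E.
apply: (@wins_intro _ _ _ _ (G n (2 * n * k) :\ x0 :\ psi x0)).
  exists x0, (psi x0); split => //.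
  rewrite /G !inE domH P2.
  have -> : x0.1 == (psi x0).1 by rewrite -val_eqE P1.
  by rewrite /=; case: (n) n0.
apply: (loses_sym psiK (@psi_hV)) => x.
rewrite !in_setD1 /G !inE (can_eq psiK) (feqE psiK).
by case: (x == x0); case: (x == psi x0).
Qed.

End Conc.

Theorem proposition3p1 (n k : nat) (hn : 0 < n) (hk : 0 < k) :
  has_outcome (G n (2 * n * k)) OutH.
Proof.
split; [exact: main_wins | exact: main_loses].
Qed.
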